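(* For all integers $k,r\geq 1$, $AW(k;r)$ exists (i.e., is finite) and satisfies $AW(k;r)\le k^{2r-1}$.
   Context: A sequence of positive integers $w_1<w_2<\dots<w_n$ is an ascending wave if $w_{i+1}-w_i \geq w_i-w_{i-1}$ for $2\le i\le n-1$. For positive integers $k,r$, $AW(k;r)$ denotes the least positive integer $N$ such that every $r$-coloring of $\{1,2,\dots,N\}$ contains a $k$-term monochromatic ascending wave. *)

(* Defs.v *)
From mathcomp Require Import all_boot.
Set Implicit Arguments. Unset Strict Implicit. Unset Printing Implicit Defensive.

Definition ascending_wave (w : seq nat) : Prop :=
  all (fun x => 0 < x) w /\ sorted ltn w /\
  forall i, i.+2 < size w ->
    nth 0 w i.+1 - nth 0 w i <= nth 0 w i.+2 - nth 0 w i.+1.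

(* Every r-coloring of {1,...,N} contains a k-term monochromatic ascending wave.
   A coloring is any c : nat -> 'I_r; only its values on {1,...,N} matter. *)
Definition AW_prop (k r N : nat) : Prop :=
  forall c : nat -> 'I_r,
    exists w : seq nat,
      [/\ size w = k, ascending_wave w,
          all (fun x => x <= N) w &
          exists col : 'I_r, all (fun x => c x == col) w].

Definition is_AW (k r N : nat) : Prop :=
  0 < N /\ AW_prop k r N /\ forall M, 0 < M -> M < N -> ~ AW_prop k r M.

(* Main.v *)
Require Import Defs.
From mathcomp Require Import all_boot zify.
From Stdlib Require Import Classical.
Set Implicit Arguments. Unset Strict Implicit.

Lemma wave_of_fun (f : nat -> nat) k :
  (forall i, i < k -> 0 < f i) ->
  (forall i, i.+1 < k -> f i < f i.+1) ->
  (forall i, i.+2 < k -> f i.+1 - f i <= f i.+2 - f i.+1) ->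
  ascending_wave (mkseq f k).
Proof.
move=> Hp Hs Hw; split; [|split].
- by apply/allP => x /mapP [i]; rewrite mem_iota => /andP [_ Hi] ->; apply: Hp.
- apply/(sortedP 0) => i; rewrite size_mkseq => Hi.
  by rewrite !nth_mkseq //; [apply: Hs | lia].
- move=> i; rewrite size_mkseq => Hi.
  by rewrite !nth_mkseq //; [apply: Hw | lia | lia].
Qed.

Lemma main_lemma k r (c : nat -> 'I_r) (hk : 0 < k) n : forall (S : {set 'I_r}) a,
  #|S| = n.+1 -> (forall x, a < x <= a + k ^ (2 * n + 1) -> c x \in S) ->
  exists w, [/\ size w = k, ascending_wave w,
     all (fun x => a < x <= a + k ^ (2 * n + 1)) w &
     exists col, all (fun x => c x == col) w].
Proof.
elim: n => [|n IH] S a HS Hc.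
- have /card_gt0P [s Hs] : 0 < #|S| by rewrite HS.
  have HS1 : S = [set s].
    by apply/eqP; rewrite eq_sym eqEcard sub1set Hs cards1 HS.
  rewrite muln0 add0n expn1 in Hc *.
  exists (mkseq (fun i => a + i.+1) k); split.
  + by rewrite size_mkseq.
  + apply: wave_of_fun => i Hi; lia.
  + by apply/allP => x /mapP [i]; rewrite mem_iota => /andP [_ Hi] ->; lia.
  + exists s; apply/allP => x /mapP [i]; rewrite mem_iota => /andP [_ Hi] ->.
    by have := Hc (a + i.+1); rewrite HS1 in_set1; apply; lia.
- set M := k ^ (2 * n + 1).
  have HE : k ^ (2 * n.+1 + 1) = k * k * M.
    by rewrite /M -mulnA -!expnS; congr (_ ^ _); lia.
  rewrite HE in Hc *.
  have HM : 0 < M by rewrite expn_gt0 hk.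
  have /card_gt0P [s0 Hs0] : 0 < #|S| by rewrite HS.
  have Hb : forall i, i < k -> i*i*M + M <= k*k*M.
    move=> i Hi; rewrite -mulSnr; apply: leq_mul => //; nia.
  have [Hall | Hnall] := boolP [forall i : 'I_k, has (fun x => c x == s0) (iota (a + i*i*M).+1 M)].
  + pose f i := nth 0 (filter (fun x => c x == s0) (iota (a + i*i*M).+1 M)) 0.
    have Hf : forall i, i < k -> c (f i) = s0 /\ a + i*i*M < f i <= a + i*i*M + M.
      move=> i Hi; have := forallP Hall (Ordinal Hi) => /= Hh.
      have : f i \in filter (fun x => c x == s0) (iota (a + i*i*M).+1 M).
        apply: mem_nth; rewrite lt0n size_eq0 -has_filter //.
      rewrite mem_filter mem_iota => /andP [/eqP -> /andP [H1 H2]]; split => //; lia.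
    exists (mkseq f k); split.
    * by rewrite size_mkseq.
    * apply: wave_of_fun => i Hi.
      -- have := Hf i Hi; lia.
      -- have := Hf i (ltnW Hi); have := Hf i.+1 Hi; nia.
      -- have := Hf i (ltnW (ltnW Hi)); have := Hf i.+1 (ltnW Hi); have := Hf i.+2 Hi; nia.
    * apply/allP => x /mapP [i]; rewrite mem_iota => /andP [_ Hi] ->.
      have := Hf i Hi; have := Hb i Hi; lia.
    * exists s0; apply/allP => x /mapP [i]; rewrite mem_iota => /andP [_ Hi] ->.
      by have [-> _] := Hf i Hi.
  + move: Hnall; rewrite negb_forall => /existsP [[i Hi] /= Hno].
    have HS' : #|S :\ s0| = n.+1 by rewrite (cardsD1 s0 S) Hs0 in HS; lia.
    have Hc' : forall x, a + i*i*M < x <= a + i*i*M + M -> c x \in S :\ s0.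
      move=> x Hx; rewrite !inE; apply/andP; split.
      * apply: contra Hno => /eqP Hcx; apply/hasP; exists x; last by rewrite Hcx.
        by rewrite mem_iota; lia.
      * apply: Hc; fold M in Hx; have := Hb i Hi; lia.
    have [w [Hw1 Hw2 Hw3 Hw4]] := IH (S :\ s0) (a + i*i*M) HS' Hc'.
    exists w; split => //.
    apply/allP => x Hx; have := allP Hw3 x Hx; have := Hb i Hi; lia.
Qed.

Lemma AW_holds k r (hk : 1 <= k) (hr : 1 <= r) : AW_prop k r (k ^ (2 * r - 1)).
Proof.
move=> c; case: r hr c => [//|n] _ c.
have HS : #|[set: 'I_n.+1]| = n.+1 by rewrite cardsT card_ord.
have [w [H1 H2 H3 H4]] := @main_lemma k n.+1 c hk n setT 0 HS (fun x _ => in_setT _).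
exists w; split => //.
apply/allP => x Hx; have := allP H3 x Hx.
have -> : 2 * n.+1 - 1 = 2 * n + 1 by lia.
lia.
Qed.

Lemma AW_zero k r (hk : 1 <= k) (hr : 1 <= r) : ~ AW_prop k r 0.
Proof.
move=> HP; have [w [Hs [Hp _] Ha _]] := HP (fun _ => Ordinal hr).
have Hin : nth 0 w 0 \in w by apply: mem_nth; rewrite Hs.
have := allP Hp _ Hin; have := allP Ha _ Hin; lia.
Qed.

Lemma AW_least k r (hk : 1 <= k) (hr : 1 <= r) m : forall N, N <= m ->
  AW_prop k r N -> exists N0, is_AW k r N0 /\ N0 <= N.
Proof.
elim: m => [|m IH] N HN HP.
- by have := AW_zero hk hr; rewrite (_ : N = 0) in HP; [|lia].
- destruct (classic (exists M, 0 < M < N /\ AW_prop k r M)) as [[M [HM HPM]]|Hno].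
  + have [N0 [H1 H2]] := IH M ltac:(lia) HPM.
    exists N0; split => //; lia.
  + exists N; split => //; split; last split => //.
    * case: N HN HP Hno => [|N] // _ HP; by have := AW_zero hk hr.
    * move=> M H1 H2 HPM; apply: Hno; exists M; split => //; lia.
Qed.

Theorem mainTheorem2 (k r : nat) (hk : 1 <= k) (hr : 1 <= r) :
  exists N : nat, is_AW k r N /\ N <= k ^ (2 * r - 1).
Proof.
exact: (AW_least hk hr (leqnn _) (AW_holds hk hr)).
Qed.
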